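(* Let $\Omega\subseteq\mathbb{R}^n$ be open and let $f\in\mathbb{A}(\Omega)$. Then: (i) for every dense subset $D$ of $\Omega$ the function $F(D,\Omega,f)$ is S-continuous; (ii) the function $G(f)=[I(S(I(f))),S(I(S(f)))]$ is D-continuous; (iii) both functions $F(S(I(f)))$ and $F(I(S(f)))$ are H-continuous and $F(S(I(f)))\le F(I(S(f)))$.
   Context: $\overline{\mathbb{R}}=\mathbb{R}\cup\{\pm\infty\}$ and $\mathbb{I}\overline{\mathbb{R}}=\{[\underline a,\overline a]:\underline a,\overline a\in\overline{\mathbb{R}},\ \underline a\le\overline a\}$, with $a\in\overline{\mathbb{R}}$ identified with $[a,a]$; extended-real-valued functions are thus regarded as interval functions. $\mathbb{A}(\Omega)$ is the set of all functions $f:\Omega\to\mathbb{I}\overline{\mathbb{R}}$, written $f=[\underline f,\overline f]$. $B_\delta(x)=\{y\in\Omega:\|x-y\|<\delta\}$. For a dense subset $D\subseteq\Omega$ and $f\in\mathbb{A}(D)$ define $I(D,\Omega,f)(x)=\sup_{\delta>0}\inf\{z\in f(y):y\in B_\delta(x)\cap D\}$, $S(D,\Omega,f)(x)=\inf_{\delta>0}\sup\{z\in f(y):y\in B_\delta(x)\cap D\}$, and $F(D,\Omega,f)(x)=[I(D,\Omega,f)(x),S(D,\Omega,f)(x)]$; when $D=\Omega$ write $I(f),S(f),F(f)$ (for $f\in\mathbb{A}(\Omega)$, $F(D,\Omega,f)$ uses the restriction of $f$ to $D$). The order on intervals is $[\underline a,\overline a]\le[\underline b,\overline b]$ iff $\underline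 a\le\underline b$ and $\overline a\le\overline b$, and $f\le g$ means $f(x)\le g(x)$ for all $x\in\Omega$. A function $f\in\mathbb{A}(\Omega)$ is S-continuous if $F(f)=f$; D-continuous if $F(D,\Omega,f)=f$ for every dense subset $D$ of $\Omega$; H-continuous if for every $g\in\mathbb{A}(\Omega)$ with $g(x)\subseteq f(x)$ for all $x$ one has $F(g)=f$. *)

(* Defs.v *)
From HB Require Import structures.
From mathcomp Require Import all_boot all_order all_algebra.
From mathcomp Require Import all_classical all_reals all_analysis.
Set Implicit Arguments. Unset Strict Implicit. Unset Printing Implicit Defensive.
Import Order.TTheory GRing.Theory Num.Theory.
Local Open Scope classical_set_scope.
Local Open Scope ring_scope.

Section IntervalFunctions.
Variables (R : realType) (n : nat).

Definition pt := 'rV[R]_n.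

Definition edist (x y : pt) : R :=
  Num.sqrt (\sum_(i < n) (x ord0 i - y ord0 i) ^+ 2).

(* an element of II(Rbar) is a pair [lo, hi]; validity lo <= hi is imposed
   separately by [in_A] *)
Definition ival := (\bar R * \bar R)%type.

Definition degen (g : pt -> \bar R) : pt -> ival := fun x => (g x, g x).

Definition in_A (Om : set pt) (f : pt -> ival) : Prop :=
  forall x, Om x -> ((f x).1 <= (f x).2)%E.

Definition ball_in (Om : set pt) (x : pt) (d : R) : set pt :=
  [set y | Om y /\ edist x y < d].

Definition open_eucl (Om : set pt) : Prop :=
  forall x, Om x -> exists d : R, 0 < d /\ [set y | edist x y < d] `<=` Om.

Definition dense_in (D Om : set pt) : Prop :=
  D `<=` Om /\ forall x, Om x -> forall d : R, 0 < d -> ball_in Om x d `&` D !=set0.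

Definition vals (D Om : set pt) (f : pt -> ival) (x : pt) (d : R) : set (\bar R) :=
  [set z | exists y, (ball_in Om x d `&` D) y /\ ((f y).1 <= z)%E /\ (z <= (f y).2)%E].

Definition Ifun (D Om : set pt) (f : pt -> ival) : pt -> \bar R :=
  fun x => ereal_sup [set ereal_inf (vals D Om f x d) | d in [set d : R | 0 < d]].

Definition Sfun (D Om : set pt) (f : pt -> ival) : pt -> \bar R :=
  fun x => ereal_inf [set ereal_sup (vals D Om f x d) | d in [set d : R | 0 < d]].

Definition Ffun (D Om : set pt) (f : pt -> ival) : pt -> ival :=
  fun x => (Ifun D Om f x, Sfun D Om f x).

Definition eq_on (Om : set pt) (f g : pt -> ival) : Prop :=
  forall x, Om x -> f x = g x.

Definition le_on (Om : set pt) (f g : pt -> ival) : Prop :=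
  forall x, Om x -> ((f x).1 <= (g x).1)%E /\ ((f x).2 <= (g x).2)%E.

Definition S_continuous (Om : set pt) (f : pt -> ival) : Prop :=
  eq_on Om (Ffun Om Om f) f.

Definition D_continuous (Om : set pt) (f : pt -> ival) : Prop :=
  forall D, dense_in D Om -> eq_on Om (Ffun D Om f) f.

Definition H_continuous (Om : set pt) (f : pt -> ival) : Prop :=
  forall g, in_A Om g ->
    (forall x, Om x -> ((f x).1 <= (g x).1)%E /\ ((g x).2 <= (f x).2)%E) ->
    eq_on Om (Ffun Om Om g) f.

End IntervalFunctions.

(* Main.v *)
Require Import Defs.
From HB Require Import structures.
From mathcomp Require Import all_boot all_order all_algebra.
From mathcomp Require Import all_classical all_reals all_analysis.
From mathcomp Require Import lra ring.
Set Implicit Arguments. Unset Strict Implicit.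
Import Order.TTheory GRing.Theory Num.Theory.
Local Open Scope classical_set_scope.
Local Open Scope ring_scope.

Section Aux.
Variables (R : realType) (n : nat).
Implicit Types x y z : 'rV[R]_n.

Lemma edist_xx x : Defs.edist x x = 0.
Proof.
rewrite /Defs.edist (eq_bigr (fun _ => 0)) ?big1 ?sqrtr0 // => i _.
by rewrite subrr expr0n.
Qed.

Lemma edist_sym x y : Defs.edist x y = Defs.edist y x.
Proof.
by rewrite /Defs.edist; congr Num.sqrt; apply: eq_bigr => i _; rewrite -sqrrN opprB.
Qed.

Lemma edist_lt x y (d : R) : 0 < d -> Defs.edist x y < d ->
  \sum_(i < n) (x ord0 i - y ord0 i) ^+ 2 < d ^+ 2.
Proof.
move=> d0 h; rewrite -ltr_sqrt ?exprn_gt0 // sqrtr_sqr gtr0_norm //.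
Qed.

Lemma edist_tri x y z (d : R) : 0 < d -> Defs.edist x y < d / 2 -> Defs.edist y z < d / 2 ->
  Defs.edist x z < d.
Proof.
move=> d0 h1 h2.
have d20 : 0 < d / 2 by rewrite divr_gt0.
have s1 := edist_lt d20 h1; have s2 := edist_lt d20 h2.
have le : \sum_(i < n) (x ord0 i - z ord0 i) ^+ 2 <=
  2 * \sum_(i < n) (x ord0 i - y ord0 i) ^+ 2 + 2 * \sum_(i < n) (y ord0 i - z ord0 i) ^+ 2.
  rewrite !mulr_sumr -big_split /=; apply: ler_sum => i _.
  set a := x ord0 i; set b := y ord0 i; set c := z ord0 i.
  have := sqr_ge0 (a - b - (b - c)); nra.
have -> : d = Num.sqrt (d ^+ 2) by rewrite sqrtr_sqr gtr0_norm.
rewrite /Defs.edist ltr_sqrt ?exprn_gt0 //.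
apply: (le_lt_trans le).
have -> : d ^+ 2 = 2 * (d / 2) ^+ 2 + 2 * (d / 2) ^+ 2 by field.
by apply: ltrD; rewrite ltr_pM2l.
Qed.
End Aux.
Section Main.
Variables (R : realType) (n : nat) (Om : set 'rV[R]_n).
Implicit Types (x y z : 'rV[R]_n) (D : set 'rV[R]_n) (u v w : 'rV[R]_n -> \bar R).
Local Open Scope ereal_scope.

Definition Ilow D u x :=
  ereal_sup [set ereal_inf [set u y | y in ball_in Om x d `&` D] | d in [set d : R | (0 < d)%R]].
Definition Supp D u x :=
  ereal_inf [set ereal_sup [set u y | y in ball_in Om x d `&` D] | d in [set d : R | (0 < d)%R]].

Lemma half_gt0 (d : R) : (0 < d)%R -> (0 < d / 2)%R.
Proof. by move=> d0; rewrite divr_gt0. Qed.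

Lemma Ifun_eq D g x : (forall y, Om y -> D y -> (g y).1 <= (g y).2) ->
  Ifun D Om g x = Ilow D (fun y => (g y).1) x.
Proof.
move=> v; rewrite /Ifun /Ilow; congr ereal_sup; apply: eq_imagel => d _.
apply/le_anti/andP; split.
- apply: le_ereal_inf_tmp => _ [y [[Omy b] Dy] <-]; apply: ereal_inf_lbound.
  by exists y; split => //; split => //; apply: v.
- apply: le_ereal_inf_tmp => z [y [By [h1 h2]]]; apply: (le_trans _ h1).
  by apply: ereal_inf_lbound; exists y.
Qed.

Lemma Sfun_eq D g x : (forall y, Om y -> D y -> (g y).1 <= (g y).2) ->
  Sfun D Om g x = Supp D (fun y => (g y).2) x.
Proof.
move=> v; rewrite /Sfun /Supp; congr ereal_inf; apply: eq_imagel => d _.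
apply/le_anti/andP; split.
- apply: ge_ereal_sup => z [y [By [h1 h2]]]; apply: (le_trans h2).
  by apply: ereal_sup_ubound; exists y.
- apply: ge_ereal_sup => _ [y [[Omy b] Dy] <-]; apply: ereal_sup_ubound.
  by exists y; split => //; split => //; apply: v.
Qed.

Lemma Ilow_le_self D u x : Om x -> D x -> Ilow D u x <= u x.
Proof.
move=> Omx Dx; apply: ge_ereal_sup => _ [d d0 <-]; apply: ereal_inf_lbound.
by exists x => //; split => //; split => //; rewrite edist_xx.
Qed.

Lemma Supp_ge_self D u x : Om x -> D x -> u x <= Supp D u x.
Proof.
move=> Omx Dx; apply: le_ereal_inf_tmp => _ [d d0 <-]; apply: ereal_sup_ubound.
by exists x => //; split => //; split => //; rewrite edist_xx.
Qed.

Lemma Ilow_mono D u v x : (forall y, Om y -> D y -> u y <= v y) ->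
  Ilow D u x <= Ilow D v x.
Proof.
move=> h; apply: ge_ereal_sup => _ [d d0 <-].
apply: (@le_trans _ _ (ereal_inf [set v y | y in ball_in Om x d `&` D])); last first.
  by apply: ereal_sup_ubound; exists d.
apply: le_ereal_inf_tmp => _ [y [[Omy b] Dy] <-]; apply: (le_trans _ (h y Omy Dy)).
by apply: ereal_inf_lbound; exists y.
Qed.

Lemma Supp_mono D u v x : (forall y, Om y -> D y -> u y <= v y) ->
  Supp D u x <= Supp D v x.
Proof.
move=> h; apply: le_ereal_inf_tmp => _ [d d0 <-].
apply: (@le_trans _ _ (ereal_sup [set u y | y in ball_in Om x d `&` D])).
  by apply: ereal_inf_lbound; exists d.
apply: ge_ereal_sup => _ [y [[Omy b] Dy] <-]; apply: (le_trans (h y Omy Dy)).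
by apply: ereal_sup_ubound; exists y.
Qed.

Lemma Ilow_sub D u x : D `<=` Om -> Ilow Om u x <= Ilow D u x.
Proof.
move=> DOm; apply: ge_ereal_sup => _ [d d0 <-].
apply: (@le_trans _ _ (ereal_inf [set u y | y in ball_in Om x d `&` D])); last first.
  by apply: ereal_sup_ubound; exists d.
apply: ereal_inf_le_tmp => _ [y [By Dy] <-]; exists y => //; split => //; exact: DOm.
Qed.

Lemma Supp_sub D u x : D `<=` Om -> Supp D u x <= Supp Om u x.
Proof.
move=> DOm; apply: le_ereal_inf_tmp => _ [d d0 <-].
apply: (@le_trans _ _ (ereal_sup [set u y | y in ball_in Om x d `&` D])).
  by apply: ereal_inf_lbound; exists d.
apply: ereal_sup_le => _ [y [By Dy] <-]; exists y => //; split => //; exact: DOm.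
Qed.

Lemma Ilow_idem D u x : Ilow D u x <= Ilow Om (Ilow D u) x.
Proof.
apply: ge_ereal_sup => _ [d d0 <-]; have d2 := half_gt0 d0.
apply: (le_trans _ (ereal_sup_ubound _)); last by exists (d / 2)%R.
apply: le_ereal_inf_tmp => _ [y [[Omy bxy] _] <-].
apply: (le_trans _ (ereal_sup_ubound _)); last by exists (d / 2)%R.
apply: ereal_inf_le_tmp => _ [z [[Omz byz] Dz] <-]; exists z => //.
by split => //; split => //; exact: edist_tri bxy byz.
Qed.

Lemma Supp_idem D u x : Supp Om (Supp D u) x <= Supp D u x.
Proof.
apply: le_ereal_inf_tmp => _ [d d0 <-]; have d2 := half_gt0 d0.
apply: (le_trans (ereal_inf_lbound _)); first by exists (d / 2)%R.
apply: ge_ereal_sup => _ [y [[Omy bxy] _] <-].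
apply: (le_trans (ereal_inf_lbound _)); first by exists (d / 2)%R.
apply: ereal_sup_le => _ [z [[Omz byz] Dz] <-]; exists z => //.
by split => //; split => //; exact: edist_tri bxy byz.
Qed.

Lemma Ilow_dense D v x : dense_in D Om -> (forall y, Om y -> Supp Om v y <= v y) ->
  Ilow D v x <= Ilow Om v x.
Proof.
move=> [DOm dD] usc; apply: ge_ereal_sup => _ [d d0 <-]; have d2 := half_gt0 d0.
apply: (le_trans _ (ereal_sup_ubound _)); last by exists (d / 2)%R.
apply: le_ereal_inf_tmp => _ [y [[Omy bxy] _] <-].
rewrite leNgt; apply/negP => lt.
have /ereal_inf_lt [_ [d' d'0 <-] ltM] := le_lt_trans (usc y Omy) lt.
have e0 : (0 < Num.min d' (d / 2))%R by rewrite lt_min d'0 d2.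
have [z [[Omz byz] Dz]] := dD y Omy _ e0.
move: byz; rewrite lt_min => /andP[b1 b2].
have h1 : v z < ereal_inf [set v y | y in ball_in Om x d `&` D].
  apply: le_lt_trans ltM; apply: ereal_sup_ubound; exists z => //.
have h2 : ereal_inf [set v y | y in ball_in Om x d `&` D] <= v z.
  apply: ereal_inf_lbound; exists z => //; split => //; split => //.
  exact: edist_tri bxy b2.
by move: h1; rewrite ltNge h2.
Qed.

Lemma Supp_dense D w x : dense_in D Om -> (forall y, Om y -> w y <= Ilow Om w y) ->
  Supp Om w x <= Supp D w x.
Proof.
move=> [DOm dD] lsc; apply: le_ereal_inf_tmp => _ [d d0 <-]; have d2 := half_gt0 d0.
apply: (le_trans (ereal_inf_lbound _)); first by exists (d / 2)%R.
apply: ge_ereal_sup => _ [y [[Omy bxy] _] <-].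
rewrite leNgt; apply/negP => lt.
have /ereal_sup_gt [_ [d' d'0 <-] ltM] := lt_le_trans lt (lsc y Omy).
have e0 : (0 < Num.min d' (d / 2))%R by rewrite lt_min d'0 d2.
have [z [[Omz byz] Dz]] := dD y Omy _ e0.
move: byz; rewrite lt_min => /andP[b1 b2].
have h1 : ereal_sup [set w y | y in ball_in Om x d `&` D] < w z.
  apply: lt_le_trans ltM _; apply: ereal_inf_lbound; exists z => //.
have h2 : w z <= ereal_sup [set w y | y in ball_in Om x d `&` D].
  apply: ereal_sup_ubound; exists z => //; split => //; split => //.
  exact: edist_tri bxy b2.
by move: h1; rewrite ltNge h2.
Qed.

Lemma Ilow_le_Supp D u w x : dense_in D Om -> Om x ->
  (forall y, Om y -> D y -> u y <= w y) -> Ilow D u x <= Supp D w x.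
Proof.
move=> [DOm dD] Omx h; apply: ge_ereal_sup => _ [d d0 <-].
apply: le_ereal_inf_tmp => _ [d' d'0 <-].
have e0 : (0 < Num.min d d')%R by rewrite lt_min d0 d'0.
have [z [[Omz bz] Dz]] := dD x Omx _ e0.
move: bz; rewrite lt_min => /andP[b1 b2].
apply: (@le_trans _ _ (u z)); first by apply: ereal_inf_lbound; exists z.
apply: (le_trans (h z Omz Dz)); apply: ereal_sup_ubound; by exists z.
Qed.
End Main.

Unset Implicit Arguments. Set Strict Implicit.

Theorem theorem2 (R : realType) (n : nat) (Om : set 'rV[R]_n)
  (f : 'rV[R]_n -> (\bar R * \bar R)%type) :
  open_eucl Om -> in_A Om f ->
  (forall D : set 'rV[R]_n, dense_in D Om -> S_continuous Om (Ffun D Om f)) /\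
  D_continuous Om
    (fun x => (Ifun Om Om (degen (Sfun Om Om (degen (Ifun Om Om f)))) x,
               Sfun Om Om (degen (Ifun Om Om (degen (Sfun Om Om f)))) x)) /\
  H_continuous Om (Ffun Om Om (degen (Sfun Om Om (degen (Ifun Om Om f))))) /\
  H_continuous Om (Ffun Om Om (degen (Ifun Om Om (degen (Sfun Om Om f))))) /\
  le_on Om (Ffun Om Om (degen (Sfun Om Om (degen (Ifun Om Om f)))))
           (Ffun Om Om (degen (Ifun Om Om (degen (Sfun Om Om f))))).
Proof.
move=> _ hf.
pose f1 := fun y => (f y).1; pose f2 := fun y => (f y).2.
have EIf : Ifun Om Om f = Ilow Om Om f1.
  by apply: funext => x; apply: Ifun_eq => y Omy _; apply: hf.
have ESf : Sfun Om Om f = Supp Om Om f2.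
  by apply: funext => x; apply: Sfun_eq => y Omy _; apply: hf.
have EId : forall D u, Ifun D Om (degen u) = Ilow Om D u.
  by move=> D u; apply: funext => x; apply: Ifun_eq => y _ _; apply: le_refl.
have ESd : forall D u, Sfun D Om (degen u) = Supp Om D u.
  by move=> D u; apply: funext => x; apply: Sfun_eq => y _ _; apply: le_refl.
set I := Ilow Om Om; set S := Supp Om Om.
have Ile : forall u x, Om x -> (I u x <= u x)%E by move=> u x Omx; exact: Ilow_le_self.
have Sge : forall u x, Om x -> (u x <= S u x)%E by move=> u x Omx; exact: Supp_ge_self.
have Imono : forall u v x, (forall y, Om y -> (u y <= v y)%E) -> (I u x <= I v x)%E.
  by move=> u v x h; apply: Ilow_mono => y Omy _; apply: h.
have Smono : forall u v x, (forall y, Om y -> (u y <= v y)%E) -> (S u x <= S v x)%E.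
  by move=> u v x h; apply: Supp_mono => y Omy _; apply: h.
have II : forall u x, Om x -> I (I u) x = I u x.
  by move=> u x Omx; apply/le_anti/andP; split; [apply: Ile | apply: Ilow_idem].
have SS : forall u x, Om x -> S (S u) x = S u x.
  by move=> u x Omx; apply/le_anti/andP; split; [apply: Supp_idem | apply: Sge].
have f12 : forall y, Om y -> (f1 y <= f2 y)%E by move=> y Omy; apply: hf.
have f1S : forall y, Om y -> (f1 y <= S f2 y)%E.
  by move=> y Omy; apply: le_trans (f12 y Omy) (Sge _ _ Omy).
have If1S : forall y, Om y -> (I f1 y <= S f2 y)%E.
  by move=> y Omy; apply: le_trans (Ile _ _ Omy) (f1S y Omy).
split.
  move=> D hD x Omx.
  have EI : Ifun D Om f = Ilow Om D f1.
    by apply: funext => y; apply: Ifun_eq => z Omz _; apply: hf.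
  have ES : Sfun D Om f = Supp Om D f2.
    by apply: funext => y; apply: Sfun_eq => z Omz _; apply: hf.
  rewrite /Ffun EI ES Ifun_eq ?Sfun_eq /=; last 2 first.
    - by move=> y Omy _; apply: Ilow_le_Supp => // z Omz _; apply: hf.
    - by move=> y Omy _; apply: Ilow_le_Supp => // z Omz _; apply: hf.
  congr pair; apply/le_anti/andP; split.
  - exact: Ile.
  - exact: Ilow_idem.
  - exact: Supp_idem.
  - exact: Sge.
rewrite /H_continuous /le_on /Ffun EIf ESf !EId !ESd -/I -/S.
split.
  move=> D hD x Omx.
  have DOm := hD.1.
  rewrite /Ffun /= Ifun_eq ?Sfun_eq /=; last 2 first.
    - move=> y Omy _; apply: le_trans (Ile _ _ Omy) _.
      by apply: Smono => z Omz; apply: Imono => t Omt; apply: f1S.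
    - move=> y Omy _; apply: le_trans (Ile _ _ Omy) _.
      by apply: Smono => z Omz; apply: Imono => t Omt; apply: f1S.
  congr pair; apply/le_anti/andP; split.
  - apply: (@le_trans _ _ (Ilow Om D (S (I f1)) x)).
      by apply: Ilow_mono => y Omy _; apply: Ile.
    by apply: Ilow_dense => // y Omy; rewrite -/S SS.
  - rewrite -II //; exact: Ilow_sub.
  - rewrite -SS //; exact: Supp_sub.
  - apply: (@le_trans _ _ (Supp Om D (I (S f2)) x)); last first.
      by apply: Supp_mono => y Omy _; apply: Sge.
    by apply: Supp_dense => // y Omy; rewrite -/I II.
split.
  move=> g hg hle x Omx.
  rewrite Ifun_eq ?Sfun_eq /=; last 2 first.
    - by move=> y Omy _; apply: hg.
    - by move=> y Omy _; apply: hg.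
  congr pair; apply/le_anti/andP; split.
  - apply: Imono => y Omy; apply: le_trans (hg y Omy) _.
    by rewrite -(SS _ _ Omy); apply: (hle y Omy).2.
  - by rewrite -II //; apply: Imono => y Omy; apply: (hle y Omy).1.
  - by rewrite -[X in (_ <= X)%E]SS //; apply: Smono => y Omy; apply: (hle y Omy).2.
  - rewrite SS //; apply: Smono => y Omy.
    apply: le_trans (hg y Omy); apply: le_trans (hle y Omy).1.
    by rewrite -II //; apply: Imono => z Omz; apply: Sge.
split.
  move=> g hg hle x Omx.
  rewrite Ifun_eq ?Sfun_eq /=; last 2 first.
    - by move=> y Omy _; apply: hg.
    - by move=> y Omy _; apply: hg.
  congr pair; apply/le_anti/andP; split.
  - rewrite II //.
    apply: (@le_trans _ _ (I (S (I (S f2))) x)).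
      by apply: Imono => y Omy; apply: le_trans (hg y Omy) (hle y Omy).2.
    apply: (@le_trans _ _ (I (S (S f2)) x)).
      by apply: Imono => y Omy; apply: Smono => z Omz; apply: Ile.
    by apply: Imono => y Omy; rewrite SS.
  - by apply: Imono => y Omy; rewrite -II //; apply: (hle y Omy).1.
  - by rewrite -[X in (_ <= X)%E]SS //; apply: Smono => y Omy; apply: (hle y Omy).2.
  - apply: Smono => y Omy; rewrite -II //.
    by apply: le_trans (hg y Omy); apply: (hle y Omy).1.
move=> x Omx; split.
- rewrite II //; apply: Imono => y Omy.
  by rewrite -[X in (_ <= X)%E]SS //; apply: Smono.
- by rewrite SS //; apply: Smono => y Omy; apply: Imono.
Qed.
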